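(* Let $\tilde{\mathbf{P}}\in\mathbb{R}^{n\times n}$ and let $\mathbf{X}\in\{0,1\}^{n\times n}$ be a binary matrix with weighted indicator matrix $\tilde{\mathbf{X}}$ such that for all $i,j\in[n]$, $\tilde{\mathbf{P}}_{ij}=\max_k\tilde{\mathbf{P}}_{ik}$ if and only if $\mathbf{X}_{ij}=1$. Then for all $\epsilon>0$ there exist $\delta>0$ and $b>0$ such that for every $\tilde{\mathbf{Q}}\in\mathbb{R}^{n\times n}$ with $\|\tilde{\mathbf{P}}-\tilde{\mathbf{Q}}\|_F<\delta$, $$\|\mathsf{softmax}(b\cdot\tilde{\mathbf{Q}})-\tilde{\mathbf{X}}\|_F<\epsilon,$$ where the softmax is applied row-wise.
   Context: For a binary vector $\mathbf{x}\in\{0,1\}^n$ with at least one nonzero entry, its weighted indicator vector is $\mathbf{x}/\sum_i x_i$. The weighted indicator matrix $\tilde{\mathbf{X}}$ of a binary matrix $\mathbf{X}$ has as $i$-th row the weighted indicator vector of the $i$-th row of $\mathbf{X}$. *)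

(* Defs.v *)
From mathcomp Require Import all_boot all_order all_algebra.
From mathcomp Require Import all_classical all_reals all_analysis.
Set Implicit Arguments. Unset Strict Implicit. Unset Printing Implicit Defensive.
Import Order.TTheory GRing.Theory Num.Theory.
Local Open Scope ring_scope.

Definition frob (R : realType) (m n : nat) (A : 'M[R]_(m, n)) : R :=
  Num.sqrt (\sum_(i < m) \sum_(j < n) A i j ^+ 2).

Definition softmax_rows (R : realType) (m n : nat) (A : 'M[R]_(m, n)) : 'M[R]_(m, n) :=
  \matrix_(i < m, j < n) (expR (A i j) / \sum_(k < n) expR (A i k)).

Definition weighted_indicator (R : realType) (m n : nat) (X : 'M[bool]_(m, n)) : 'M[R]_(m, n) :=
  \matrix_(i < m, j < n) ((X i j)%:R / (\sum_(k < n) (X i k)%:R)).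

Definition is_row_max (R : realType) (m n : nat) (P : 'M[R]_(m, n)) (i : 'I_m) (j : 'I_n) : Prop :=
  forall k : 'I_n, P i k <= P i j.

(* Main.v *)
Require Import Defs.
From mathcomp Require Import all_boot all_order all_algebra.
From mathcomp Require Import all_classical all_reals all_analysis.
From mathcomp Require Import ring lra.
Import Order.TTheory GRing.Theory Num.Theory.
Local Open Scope ring_scope.

Lemma seq_min (R : realType) (T : eqType) (s : seq T) (p : pred T) (f : T -> R) :
  (forall t, p t -> 0 < f t) -> exists g, 0 < g /\ forall t, t \in s -> p t -> g <= f t.
Proof.
move=> fp; elim: s => [|a s [g [g0 Hg]]]; first by exists 1; split.
case pa: (p a).
  exists (Num.min g (f a)); split; first by rewrite lt_min g0 fp.
  move=> t; rewrite inE => /orP [/eqP-> _|ts pt]; first by rewrite ge_min lexx orbT.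
  by rewrite ge_min Hg.
exists g; split => // t; rewrite inE => /orP [/eqP-> |ts pt]; first by rewrite pa.
exact: Hg.
Qed.

Lemma seq_argmax (R : realType) (T : eqType) (x0 : T) (s : seq T) (f : T -> R) :
  exists x, forall y, y \in x0 :: s -> f y <= f x.
Proof.
elim: s => [|a s [x Hx]]; first by exists x0 => y; rewrite inE => /eqP->.
case: (leP (f a) (f x)) => h.
  exists x => y; rewrite !inE => /orP [/eqP->|/orP [/eqP->|ys]] //.
  - by apply: Hx; rewrite inE eqxx.
  - by apply: Hx; rewrite inE ys orbT.
exists a => y; rewrite !inE => /orP [/eqP->|/orP [/eqP->|ys]] //.
  - apply: le_trans (ltW h); by apply: Hx; rewrite inE eqxx.
  - apply: le_trans (ltW h); by apply: Hx; rewrite inE ys orbT.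
Qed.

Lemma ord_argmax (R : realType) n (f : 'I_n -> R) (i0 : 'I_n) :
  exists j, forall k, f k <= f j.
Proof.
have [x Hx] := @seq_argmax _ _ i0 (enum 'I_n) f.
by exists x => k; apply: Hx; rewrite inE mem_enum orbT.
Qed.

Lemma entry_le_frob (R : realType) m n (A : 'M[R]_(m, n)) i j : `|A i j| <= frob A.
Proof.
rewrite /frob -sqrtr_sqr ler_sqrt; last by rewrite sumr_ge0 // => k _; rewrite sumr_ge0 // => l _; rewrite sqr_ge0.
rewrite (bigD1 i) //= (bigD1 j) //= -addrA lerDl addr_ge0 //.
  by rewrite sumr_ge0 // => k _; rewrite sqr_ge0.
by rewrite sumr_ge0 // => k _; rewrite sumr_ge0 // => l _; rewrite sqr_ge0.
Qed.

Lemma frob_lt (R : realType) n (A : 'M[R]_n) (eta eps : R) :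
  0 <= eta -> 0 < eps -> (forall i j, `|A i j| <= eta) -> n%:R * eta < eps -> frob A < eps.
Proof.
move=> e0 eps0 HA hn.
have Hs : \sum_(i < n) \sum_(j < n) A i j ^+ 2 < eps ^+ 2.
  apply: (@le_lt_trans _ _ (\sum_(i < n) \sum_(j < n) eta ^+ 2)).
    apply: ler_sum => i _; apply: ler_sum => j _.
    by rewrite -real_normK ?num_real // ler_sqr ?nnegrE // HA.
  rewrite !sumr_const card_ord.
  have -> : eta ^+ 2 *+ n *+ n = (n%:R * eta) ^+ 2.
    by rewrite -mulrnA mulnn exprMn -natrX mulrC mulr_natr.
  have ne0 : 0 <= n%:R * eta by rewrite mulr_ge0 ?ler0n.
  by rewrite ltr_sqr ?nnegrE // ltW.
rewrite /frob.
have -> : eps = Num.sqrt (eps ^+ 2) by rewrite sqrtr_sqr ger0_norm // ltW.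
by rewrite ltr_sqrt // exprn_gt0.
Qed.

Lemma core (R : realType) n (u : 'I_n -> R) (S : 'I_n -> bool) (L U rho eta : R) (j0 j : 'I_n) :
  S j0 -> 0 < L -> 0 <= rho -> (forall k, 0 < u k) ->
  (forall k, S k -> L <= u k <= U) -> (forall k, ~~ S k -> u k <= rho) ->
  U + n%:R * rho <= (1 + eta) * L -> rho <= eta * L ->
  `|u j / (\sum_k u k) - (S j)%:R / (\sum_k ((S k)%:R : R))| <= eta.
Proof.
move=> Sj0 L0 r0 u0 HS HnS h1 h2.
set s := \sum_k ((S k)%:R : R); set T := \sum_k u k.
have s1 : 1 <= s.
  rewrite /s (bigD1 j0) //= Sj0 lerDl sumr_ge0 // => k _; exact: ler0n.
have Ts : s * L <= T.
  rewrite /s /T mulr_suml; apply: ler_sum => k _.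
  case Sk: (S k); first by rewrite mul1r; case/andP: (HS k Sk).
  by rewrite mul0r ltW.
have Tu : T <= s * U + n%:R * rho.
  have -> : n%:R * rho = \sum_(k < n) rho by rewrite sumr_const card_ord mulr_natl.
  rewrite /s /T mulr_suml -big_split /=; apply: ler_sum => k _.
  case Sk: (S k); first by rewrite mul1r; case/andP: (HS k Sk) => _ h; rewrite -[u k]addr0 lerD.
  by rewrite mul0r add0r HnS // Sk.
have LU : L <= U by case/andP: (HS j0 Sj0); apply: le_trans.
have eta0 : 0 <= eta.
  by have := mulr_ge0 r0 (ltW L0); nra.
have n0 : 0 <= n%:R * rho :> R by rewrite mulr_ge0 // ler0n.
have T0 : 0 < T by nra.
case Sj: (S j).
  have [h3 h4] : L <= u j /\ u j <= U by case/andP: (HS j Sj).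
  have -> : u j / T - 1%:R / s = (s * u j - T) / (s * T).
    by field; apply/andP; split; rewrite gt_eqF //; nra.
  have sT0 : 0 < s * T by nra.
  rewrite ler_norml ler_pdivlMr // ler_pdivrMr //.
  have p1 : 0 <= s * (U - u j) by rewrite mulr_ge0 // ?subr_ge0 //; lra.
  have p2 : 0 <= s * ((1 + eta) * L - U - n%:R * rho) by rewrite mulr_ge0 //; lra.
  have p3 : 0 <= eta * (T - s * L) by rewrite mulr_ge0 // subr_ge0.
  have p4 : 0 <= eta * T * (s - 1) by rewrite !mulr_ge0 ?subr_ge0 // ltW.
  have p5 : 0 <= s * (u j - L) by rewrite mulr_ge0 // ?subr_ge0 //; lra.
  have p6 : 0 <= (s - 1) * (n%:R * rho) by rewrite mulr_ge0 // subr_ge0.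
  apply/andP; split; nra.
have h3 := HnS j (negbT Sj).
have -> : (false%:R / s) = 0 :> R by rewrite mul0r.
rewrite subr0 ger0_norm; last by rewrite divr_ge0 // ltW.
rewrite ler_pdivrMr //.
have p4 : 0 <= eta * T * (s - 1) by rewrite !mulr_ge0 ?subr_ge0 // ltW.
have p3 : 0 <= eta * (T - s * L) by rewrite mulr_ge0 // subr_ge0.
nra.
Qed.

Lemma h1_aux (R : realType) (L Aq B r eta N : R) :
  0 < L -> 0 <= N -> Aq <= 1 + eta / 2 -> B <= r -> N * r <= eta / 2 ->
  L * Aq + N * (L * B) <= (1 + eta) * L.
Proof.
move=> L0 N0 hA hB hN.
have p1 : 0 <= L * (1 + eta / 2 - Aq) by rewrite mulr_ge0 ?subr_ge0 // ltW.
have p2 : 0 <= L * (N * (r - B)) by rewrite !mulr_ge0 ?subr_ge0 // ltW.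
have p3 : 0 <= L * (eta / 2 - N * r) by rewrite mulr_ge0 ?subr_ge0 // ltW.
nra.
Qed.

Lemma h2_aux (R : realType) (L B r eta : R) :
  0 < L -> B <= r -> r <= eta -> L * B <= eta * L.
Proof.
move=> L0 hB hr; rewrite mulrC ler_pM2r //; exact: le_trans hr.
Qed.

Theorem lemmaF3 (R : realType) (n : nat) (P : 'M[R]_n) (X : 'M[bool]_n) :
  (forall i j : 'I_n, is_row_max P i j <-> X i j = true) ->
  forall eps : R, 0 < eps ->
  exists delta : R, exists b : R, 0 < delta /\ 0 < b /\
    forall Q : 'M[R]_n, frob (P - Q) < delta ->
      frob (softmax_rows (b *: Q) - weighted_indicator R X) < eps.
Proof.
move=> H e e0.
have hn1 : (n.+1)%:R = n%:R + 1 :> R by rewrite -natr1.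
have n0 : 0 <= n%:R :> R by exact: ler0n.
set eta := e / (n.+1)%:R.
have eta0 : 0 < eta by rewrite divr_gt0 // ltr0n.
have neta : n%:R * eta < e.
  by rewrite /eta mulrA ltr_pdivrMr ?ltr0n // mulrC ltr_pM2l // ltr_nat.
have Hpos : forall t : 'I_n * 'I_n * 'I_n, X t.1.1 t.1.2 && ~~ X t.1.1 t.2 ->
    0 < P t.1.1 t.1.2 - P t.1.1 t.2.
  move=> [[i j] k] /= /andP [xij xk]; rewrite subr_gt0.
  have Mj := (proj2 (H i j) xij).
  rewrite lt_neqAle Mj andbT; apply/negP => /eqP E.
  have : is_row_max P i k by move=> k'; rewrite E; apply: Mj.
  by move/(H i k)=> xik; rewrite xik in xk.
have [g [g0 Hg]] := @seq_min R _ (enum {: 'I_n * 'I_n * 'I_n}) _ _ Hpos.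
have gap : forall i j k, X i j -> ~~ X i k -> g <= P i j - P i k.
  by move=> i j k xij xk; apply: (Hg (i, j, k)); rewrite ?mem_enum //= xij xk.
set r := eta / (2 * (n.+1)%:R).
have r0 : 0 < r by rewrite divr_gt0 // mulr_gt0 // ltr0n.
have nr : n%:R * r <= eta / 2.
  rewrite /r mulrA ler_pdivrMr ?mulr_gt0 ?ltr0n // hn1; nra.
have rle : r <= eta.
  rewrite /r ler_pdivrMr ?mulr_gt0 ?ltr0n // hn1; nra.
set b := 4 * (`|ln r| + 1) / g.
have b0 : 0 < b by rewrite divr_gt0 // mulr_gt0 // ltr_wpDl.
have bg : b * g / 4 = `|ln r| + 1 by rewrite /b; field; rewrite gt_eqF.
have Hr : expR (- (b * g / 4)) <= r.
  rewrite -[X in _ <= X](@lnK R r) ?posrE // ler_expR bg.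
  have h := ler_norm (- ln r); rewrite normrN in h; lra.
have b4 : 0 < 4 * b by rewrite pmulr_rgt0.
set l := ln (1 + eta / 2).
have l0 : 0 < l by apply: ln_gt0; lra.
set delta := Num.min (g / 8) (l / (4 * b)).
have d0 : 0 < delta by rewrite lt_min !divr_gt0.
have dg : delta <= g / 8 by rewrite ge_min lexx.
have dl : 4 * b * delta <= l.
  rewrite [X in X <= _]mulrC -ler_pdivlMr; last exact: b4.
  by rewrite ge_min lexx orbT.
have HA : expR (4 * b * delta) <= 1 + eta / 2.
  rewrite -[X in _ <= X](@lnK R (1 + eta / 2)); last by rewrite posrE; lra.
  by rewrite ler_expR.
exists delta, b; split => //; split => // Q hQ.
have entry : forall i k, `|P i k - Q i k| < delta.
  by move=> i k; have := @entry_le_frob R n n (P - Q) i k; rewrite !mxE => h; apply: le_lt_trans hQ.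
apply: (@frob_lt R n _ eta e (ltW eta0) e0) => // i j.
rewrite !mxE.
have [j0 Hj0] := @ord_argmax R n (fun k => P i k) i.
have xj0 : X i j0 by apply/(H i j0) => k; exact: Hj0.
under eq_bigr do rewrite mxE.
set L := expR (b * (Q i j0 - 2 * delta)).
set Aq := expR (4 * b * delta).
set B := expR (b * (2 * delta - g / 2)).
have ej0 := entry i j0; rewrite ltr_norml in ej0; case/andP: ej0 => ej1 ej2.
apply: (@core R n (fun k => expR (b * Q i k)) (X i) L (L * Aq) (L * B) eta j0 j xj0).
- exact: expR_gt0.
- by rewrite mulr_ge0 // ltW // expR_gt0.
- by move=> k; exact: expR_gt0.
- move=> k xk.
  have Pe : P i k = P i j0.
    by apply/eqP; rewrite eq_le Hj0 /=; apply: ((H i k).2 xk j0).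
  have ek := entry i k; rewrite ltr_norml in ek; case/andP: ek => ek1 ek2.
  rewrite /L /Aq -expRD !ler_expR.
  have -> : b * (Q i j0 - 2 * delta) + 4 * b * delta = b * (Q i j0 + 2 * delta) by ring.
  rewrite !ler_pM2l //; apply/andP; split; lra.
- move=> k xk.
  have gk := gap i j0 k xj0 xk.
  have ek := entry i k; rewrite ltr_norml in ek; case/andP: ek => ek1 ek2.
  rewrite /L /B -expRD ler_expR.
  have -> : b * (Q i j0 - 2 * delta) + b * (2 * delta - g / 2) = b * (Q i j0 - g / 2) by ring.
  rewrite ler_pM2l //; lra.
- apply: (@h1_aux R L Aq B r eta n%:R) => //; first exact: expR_gt0.
  apply: (le_trans _ Hr); rewrite /B ler_expR.
  have -> : - (b * g / 4) = b * (- (g / 4)) by ring.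
  rewrite ler_pM2l //; lra.
- apply: h2_aux rle; first exact: expR_gt0.
  apply: (le_trans _ Hr); rewrite /B ler_expR.
  have -> : - (b * g / 4) = b * (- (g / 4)) by ring.
  rewrite ler_pM2l //; lra.
Qed.
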